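(* Let $G$ be a finite simple undirected graph, and let $c:V(G)\to \mathbb{R}_{>0}$ and $\kappa:V(G)\to \mathbb{Z}$ be functions such that $0\leq \kappa(u)\leq d_G(u)$ for every vertex $u$ of $G$. Then $$\beta(G,c,\kappa) \leq \sum_{u\in V(G)} \frac{c(u)\big(d_G(u)-\kappa(u)\big)\big(d_G(u)-\kappa(u)+1\big)}{2(d_G(u)+1)}.$$
   Context: $d_G(u)$ denotes the degree of $u$ in $G$, and $[n]=\{1,\dots,n\}$. For a function $\lambda:V(G)\to\mathbb{Z}$, a set $I\subseteq V(G)$ is called $\lambda$-degenerate in $G$ if there is a linear ordering $u_1,\ldots,u_k$ of the vertices of $I$ such that for every $i\in[k]$, $u_i$ has at most $\lambda(u_i)$ neighbors in $\{u_j: j\in[i-1]\}$. Define $$\beta(G,c,\kappa)=\min\Big\{\sum_{u\in V(G)} c(u)\iota(u) : \iota:V(G)\to\mathbb{Z}_{\geq 0} \text{ and } V(G) \text{ is } (\kappa+\iota)\text{-degenerate in } G\Big\}.$$ *)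

(* Defs.v *)
From HB Require Import structures.
From mathcomp Require Import all_boot all_order all_algebra.
Set Implicit Arguments. Unset Strict Implicit. Unset Printing Implicit Defensive.
Import Order.TTheory GRing.Theory Num.Theory.
Local Open Scope ring_scope.

Definition simple_graph (T : finType) (e : rel T) : Prop :=
  symmetric e /\ irreflexive e.

Definition deg (T : finType) (e : rel T) (u : T) : nat := #|[set v | e u v]|.

Definition degenerate (T : finType) (e : rel T) (lam : T -> int) (I : {set T}) : Prop :=
  exists s : seq T, [/\ uniq s, s =i I &
    forall (s1 s2 : seq T) (u : T), s = s1 ++ u :: s2 ->
      ((#|[set v in s1 | e u v]|)%:Z <= lam u)%R].

Definition beta_feasible (T : finType) (e : rel T) (kappa : T -> int) (iota : T -> nat) : Prop :=
  degenerate e (fun u => kappa u + (iota u)%:Z) [set: T].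

Definition beta_cost (R : numDomainType) (T : finType) (c : T -> R) (iota : T -> nat) : R :=
  \sum_(u : T) c u * (iota u)%:R.

Definition is_beta (R : numDomainType) (T : finType) (e : rel T) (c : T -> R)
    (kappa : T -> int) (b : R) : Prop :=
  ((exists2 iota, beta_feasible e kappa iota & beta_cost c iota = b) /\
   (forall iota, beta_feasible e kappa iota -> b <= beta_cost c iota))%type.

(* Main.v *)
Require Import Defs.
From HB Require Import structures.
From mathcomp Require Import all_boot all_order all_algebra zify ring lra.
From Stdlib Require Import Classical.
Import Order.TTheory GRing.Theory Num.Theory.
Local Open Scope ring_scope.

Definition Sn (d k : nat) : nat := (\sum_(j < d.+1) (j - k))%N.

Lemma SnS d k : Sn d.+1 k = (Sn d k + (d.+1 - k))%N.
Proof. by rewrite /Sn big_ord_recr. Qed.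

Lemma Sn_closed d k : (k <= d.+1)%N -> (2 * Sn d k = (d - k) * (d - k + 1))%N.
Proof.
elim: d k => [|d IH] k hk.
  by rewrite /Sn big_ord_recr big_ord0 /=; lia.
rewrite SnS mulnDr.
have [hk'|hk'] := leqP k d.+1.
  rewrite IH //. nia.
have -> : k = d.+2 by lia.
rewrite /Sn big1 => [|i _]; [lia|]. have := ltn_ord i; lia.
Qed.

Section R.
Variable R : realFieldType.
Definition F (d k : nat) : R := (Sn d k)%:R / (d.+1)%:R.

Lemma F_rec d k : (d.+1)%:R * F d k = d%:R * F d.-1 k + (d - k)%N%:R.
Proof.
case: d => [|d].
  by rewrite /F /Sn big_ord_recr big_ord0 /= !add0n sub0n !mulr0n !(mul0r, mulr0, add0r).
rewrite /F /= SnS natrD mulrC divfK ?pnatr_eq0 // [_.+1%:R * _]mulrC divfK ?pnatr_eq0 //.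
Qed.
End R.

Section Main.
Variable R : realFieldType.
Variable T : finType.
Variable e : rel T.
Hypothesis irr : irreflexive e.
Variable c : T -> R.
Variable k : T -> nat.

Definition dS (S : {set T}) u := #|[set v in S | e u v]|.
Definition B (S : {set T}) : R := \sum_(u in S) c u * F R (dS S u) (k u).

Lemma dS_D1 (S : {set T}) (u v : T) : v \in S -> dS (S :\ v) u = (dS S u - e u v)%N.
Proof.
move=> vS; rewrite /dS (cardsD1 v [set w in S | e u w]) inE vS /=.
have -> : [set w in S :\ v | e u w] = [set w in S | e u w] :\ v.
  by apply/setP => w; rewrite !inE andbA.
lia.
Qed.

Lemma sum_ind (A : {set T}) (b : pred T) :
  \sum_(v in A) ((b v)%:R : R) = #|[set v in A | b v]|%:R.
Proof.
transitivity (\sum_(v in A | b v) (1:R)).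
  by rewrite big_mkcondr /=; apply: eq_bigr => v _; case: (b v).
rewrite (eq_bigl (fun v => v \in [set v in A | b v])); last by move=> v; rewrite inE.
by rewrite sumr_const.
Qed.

Lemma key (S : {set T}) :
  \sum_(v in S) (c v * (dS S v - k v)%N%:R + B (S :\ v)) = #|S|%:R * B S.
Proof.
rewrite big_split /= /B.
have -> : \sum_(v in S) \sum_(u in S :\ v) c u * F R (dS (S :\ v) u) (k u)
  = \sum_(u in S) \sum_(v in S :\ u) c u * F R (dS (S :\ v) u) (k u).
  have E : forall v, \sum_(u in S :\ v) c u * F R (dS (S :\ v) u) (k u)
     = \sum_(u in S) (if u != v then c u * F R (dS (S :\ v) u) (k u) else 0).
    move=> v; rewrite -big_mkcondr /=; apply: eq_bigl => u; rewrite !inE; lia.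
  rewrite (eq_bigr _ (fun v _ => E v)) exchange_big /=.
  apply: eq_bigr => u _; rewrite -big_mkcondr /=; apply: eq_bigl => v.
  rewrite !inE eq_sym; lia.
rewrite -big_split mulr_sumr /=; apply: eq_bigr => u uS.
set d := dS S u.
rewrite (eq_bigr (fun v => c u * F R d (k u) - c u * (F R d (k u) - F R d.-1 (k u)) * (e u v)%:R)); last first.
  move=> v; rewrite inE => /andP [_ vS]; rewrite dS_D1 // -/d.
  by case: (e u v); rewrite ?subn0 ?subn1 /= ?mulr1 ?mulr0 ?subr0 //; ring.
rewrite sumrB sumr_const -mulr_sumr sum_ind.
have -> : #|[set v in S :\ u | e u v]| = d.
  rewrite /d /dS; apply: eq_card => v; rewrite !inE.
  by case: eqP => [->|]; rewrite ?irr ?andbF.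
have -> : #|S| = #|S :\ u|.+1 by rewrite (cardsD1 u S) uS.
have Fr := F_rec R d (k u).
have -> : ((d - k u)%N%:R : R) = d.+1%:R * F R d (k u) - d%:R * F R d.-1 (k u) by rewrite Fr; ring.
rewrite -!natr1 mulrnAr -mulr_natr; ring.
Qed.

Definition cnt (s : seq T) (u : T) := #|[set v in take (index u s) s | e u v]|.

Lemma avg (S : {set T}) (a : T -> R) (b : R) (v : T) : v \in S ->
  \sum_(u in S) a u = #|S|%:R * b -> exists2 u, u \in S & a u <= b.
Proof.
move=> vS hs; case: (boolP [exists u in S, a u <= b]).
  by move=> /exists_inP [u uS hu]; exists u.
move=> /exists_inP hn; exfalso.
have : #|S|%:R * b < \sum_(u in S) a u.
  rewrite mulr_natl -sumr_const; apply: ltr_sum.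
    by apply/hasP; exists v; rewrite ?mem_index_enum.
  move=> u uS; rewrite ltNge; apply/negP => h; apply: hn; by exists u.
by rewrite hs ltxx.
Qed.

Lemma order_exists (S : {set T}) : exists s : seq T,
  [/\ uniq s, s =i S & \sum_(u in S) c u * (cnt s u - k u)%N%:R <= B S].
Proof.
have [n] := ubnP #|S|; elim: n S => // n IH S hS.
case: (set_0Vmem S) => [->|[v vS]].
  exists [::]; split => //; first by move=> x; rewrite inE.
  by rewrite /B !big_set0.
have [v0 v0S hv0] := @avg S _ _ v vS (key S).
have [s' [us' ms' hs']] : exists s' : seq T,
  [/\ uniq s', s' =i S :\ v0 & \sum_(u in S :\ v0) c u * (cnt s' u - k u)%N%:R <= B (S :\ v0)].
  apply: IH; rewrite (cardsD1 v0 S) v0S in hS; lia.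
have v0s' : v0 \notin s' by rewrite ms' !inE eqxx.
exists (rcons s' v0); split.
- by rewrite rcons_uniq v0s'.
- move=> x; rewrite mem_rcons inE ms' !inE; case: eqP => // ->; by rewrite v0S.
apply: le_trans hv0.
rewrite (bigD1 v0) //=; apply: lerD.
  rewrite /cnt -cats1 index_cat (negbTE v0s') /= eqxx addn0 take_size_cat //.
  have -> : #|[set w in s' | e v0 w]| = dS S v0.
    rewrite /dS; apply: eq_card => w; rewrite !inE ms' !inE.
    by case: eqP => [->|]; rewrite ?irr ?andbF.
  by [].
apply: le_trans hs'; rewrite le_eqVlt; apply/orP; left; apply/eqP.
rewrite (eq_bigl (fun u => u \in S :\ v0)); last by move=> u; rewrite !inE andbC.
apply: eq_bigr => u; rewrite -ms' => us.
by rewrite /cnt -cats1 index_cat us takel_cat // index_size.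
Qed.
End Main.

Lemma fin_min (R : realFieldType) (X : finType) (P : X -> Prop) (f : X -> R) :
  (exists x, P x) -> exists x, P x /\ forall y, P y -> f x <= f y.
Proof.
move=> [x0 Px0].
suff H : forall r : seq X, (exists x, x \in r /\ P x) ->
  exists x, P x /\ forall y, y \in r -> P y -> f x <= f y.
  have [x [Px hx]] := H (enum X) (ex_intro _ x0 (conj (mem_enum _ x0) Px0)).
  by exists x; split => // y Py; apply: hx => //; rewrite mem_enum.
elim=> [|a r IH] [x [xr Px]]; first by rewrite in_nil in xr.
case: (classic (exists x, x \in r /\ P x)) => [/IH [z [Pz hz]]|hn].
  case: (classic (P a)) => Pa.
    have [faz|fza] := leP (f a) (f z).
      exists a; split => // y; rewrite inE => /orP [/eqP ->|yr] Py //.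
      by apply: le_trans faz (hz y yr Py).
    exists z; split => // y; rewrite inE => /orP [/eqP ->|yr] Py.
      exact: ltW.
    exact: hz.
  exists z; split => // y; rewrite inE => /orP [/eqP ->|yr] Py //.
  exact: hz.
have Pa : P a.
  move: xr; rewrite inE => /orP [/eqP <-|xr] //.
  by exfalso; apply: hn; exists x.
exists a; split => // y; rewrite inE => /orP [/eqP ->|yr] Py //.
by exfalso; apply: hn; exists y.
Qed.

Lemma feas_cap (T : finType) (e : rel T) (kappa : T -> int) (iota iota' : T -> nat) :
  (forall u, 0 <= kappa u) ->
  beta_feasible e kappa iota ->
  (forall u, (iota u <= iota' u)%N \/ (deg e u <= iota' u)%N) ->
  beta_feasible e kappa iota'.
Proof.
move=> k0 [s [us ms hs]] hi; exists s; split => // s1 s2 u hsu.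
have h1 := hs s1 s2 u hsu.
have h2 : (#|[set v in s1 | e u v]| <= deg e u)%N.
  by apply: subset_leq_card; apply/subsetP => v; rewrite !inE => /andP [].
have := k0 u; case: (hi u) => h3; lia.
Qed.

Theorem theorem1 (R : realFieldType) (T : finType) (e : rel T)
    (c : T -> R) (kappa : T -> int) :
  simple_graph e ->
  (forall u, 0 < c u) ->
  (forall u, 0 <= kappa u /\ kappa u <= (deg e u)%:Z) ->
  (exists b : R, is_beta e c kappa b) /\
  (forall b : R, is_beta e c kappa b ->
     b <= \sum_(u : T)
            c u * ((((deg e u)%:Z - kappa u) * ((deg e u)%:Z - kappa u + 1))%:~R)
              / (2 * ((deg e u).+1)%:R)).
Proof.
move=> [esym eirr] cpos hk.
pose k u := `|kappa u|%N.
have hkk : forall u, kappa u = (k u)%:Z.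
  by move=> u; rewrite /k gez0_abs //; case: (hk u).
have k0 : forall u, 0 <= kappa u by move=> u; case: (hk u).
have [s [us ms hs]] := order_exists R T e eirr c k [set: T].
pose io u := (cnt T e s u - k u)%N.
have feas : beta_feasible e kappa io.
  exists s; split; [exact: us|exact: ms|].
  move=> s1 s2 u hsu.
  have us1 : u \notin s1.
    by move: us; rewrite hsu cat_uniq /= => /and3P [_ /norP [] ].
  have hc : cnt T e s u = #|[set v in s1 | e u v]|.
    by rewrite /cnt hsu take_pivot.
  rewrite /io hc hkk; lia.
have cost_le : beta_cost c io <= B R T e c k [set: T].
  rewrite /beta_cost; apply: le_trans hs; rewrite le_eqVlt; apply/orP; left; apply/eqP.
  by apply: eq_bigl => u; rewrite inE.
split.
  pose N := #|T|.
  have ne : exists g : {ffun T -> 'I_N.+1},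
      beta_feasible e kappa (fun u => nat_of_ord (g u)).
    exists [ffun u => inord (io u)].
    apply: feas_cap feas _ => // u; left; rewrite ffunE inordK //.
    rewrite ltnS /io; apply: leq_trans (leq_subr _ _) _; exact: max_card.
  have [g [Pg hg]] := @fin_min R {ffun T -> 'I_N.+1}
     (fun g => beta_feasible e kappa (fun u => nat_of_ord (g u)))
     (fun g => beta_cost c (fun u => nat_of_ord (g u))) ne.
  exists (beta_cost c (fun u => nat_of_ord (g u))); split.
    by exists (fun u => nat_of_ord (g u)).
  move=> iota fi.
  pose g' : {ffun T -> 'I_N.+1} := [ffun u => inord (minn (iota u) (deg e u))].
  have g'E : forall u, nat_of_ord (g' u) = minn (iota u) (deg e u).
    move=> u; rewrite ffunE inordK // ltnS.
    apply: leq_trans (geq_minr _ _) _; exact: max_card.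
  apply: le_trans (hg g' _) _.
    apply: feas_cap fi _ => // u; rewrite g'E.
    case: (leqP (iota u) (deg e u)) => h; [left|right]; lia.
  rewrite /beta_cost; apply: ler_sum => u _; rewrite g'E.
  by rewrite ler_wpM2l ?(ltW (cpos u)) // ler_nat geq_minl.
move=> b [_ hb]; apply: le_trans (hb _ feas) _; apply: le_trans cost_le _.
rewrite /B (eq_bigl (fun u => true)); last by move=> u; rewrite inE.
 apply: ler_sum => u _; rewrite le_eqVlt; apply/orP; left; apply/eqP.
have -> : dS T e [set: T] u = deg e u.
  by rewrite /dS /deg; apply: eq_card => v; rewrite !inE.
set d := deg e u.
have kd : (k u <= d)%N by have := hk u; rewrite hkk; case=> _; lia.
rewrite hkk.
have -> : ((d%:Z - (k u)%:Z) * (d%:Z - (k u)%:Z + 1)) = (2 * Sn d (k u))%N%:Z.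
  rewrite Sn_closed; last lia.
  nia.
rewrite -mulrA; congr (_ * _).
change (F R d (k u) = ((2 * Sn d (k u))%N%:R : R) / (2 * d.+1%:R)).
rewrite /F natrM; field.
by rewrite addrC natr1 pnatr_eq0.
Qed.
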